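(* Let $v \ge 240$ be an integer. Then \[ \beta(4,v,4) \le \left\lfloor \frac{4v-10}{3} \right\rfloor, \] and \[ \beta(4,v,4) \ge \begin{cases} \frac{4v-21}{3} & \text{if } v \equiv 0 \pmod 3,\\ \frac{4v-13}{3} & \text{if } v \equiv 1 \pmod 3,\\ \frac{4v-17}{3} & \text{if } v \equiv 2 \pmod 3. \end{cases} \]
   Context: For integers $v \ge k \ge 2$, a $(v,k)$-packing is a pair $(X,\mathcal{B})$ where $X$ is a set of $v$ points and $\mathcal{B}$ is a set of $k$-subsets of $X$ (blocks) such that every pair of distinct points lies in at most one block. A partial parallel class (PPC) is a set of pairwise disjoint blocks; its size is the number of blocks. A PPC of size $\rho$ is maximum if the packing has no PPC of size $\rho+1$. $\beta(\rho,v,k)$ denotes the maximum number of blocks in a $(v,k)$-packing in which the maximum PPC has size $\rho$. *)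

(* Defs.v *)
From mathcomp Require Import all_boot.
Set Implicit Arguments. Unset Strict Implicit. Unset Printing Implicit Defensive.

Definition is_packing (v k : nat) (B : {set {set 'I_v}}) : bool :=
  [forall b in B, #|b| == k] &&
  [forall x : 'I_v, forall y : 'I_v,
     (x != y) ==> (#|[set b in B | (x \in b) && (y \in b)]| <= 1)].

Definition is_ppc (v : nat) (B P : {set {set 'I_v}}) : bool :=
  (P \subset B) &&
  [forall b1 in P, forall b2 in P, (b1 != b2) ==> [disjoint b1 & b2]].

Definition max_ppc_size (v : nat) (B : {set {set 'I_v}}) : nat :=
  \max_(P : {set {set 'I_v}} | is_ppc B P) #|P|.

(* beta(rho, v, k): maximum number of blocks of a (v,k)-packing whose maximum
   PPC has size rho (0 if there is no such packing). *)
Definition beta (rho v k : nat) : nat :=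
  \max_(B : {set {set 'I_v}} | is_packing k B && (max_ppc_size B == rho)) #|B|.

(* Main.v *)
Require Import Defs.
From mathcomp Require Import all_boot zify.
Set Implicit Arguments. Unset Strict Implicit. Unset Printing Implicit Defensive.

Lemma card_bigcup_disj (T U : finType) (f : U -> {set T}) (I : {set U}) :
  {in I &, forall i j, i != j -> [disjoint f i & f j]} ->
  #|\bigcup_(i in I) f i| = \sum_(i in I) #|f i|.
Proof.
elim: {I}_.+1 {-2}I (ltnSn #|I|) => // n IH I.
case: (set_0Vmem I) => [->|[i iI]] lt dis; first by rewrite !big_set0 cards0.
rewrite (big_setD1 _ iI) /= (big_setD1 _ iI) /= cardsU.
rewrite disjoint_setI0 ?cards0 ?subn0.
  rewrite IH //; first by rewrite (cardsD1 i I) iI in lt.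
  by move=> j k /setD1P[_ jI] /setD1P[_ kI]; apply: dis.
apply/bigcup_disjoint => j /setD1P[ji jI]; apply: dis => //; by rewrite eq_sym.
Qed.

Lemma fam_le (T U : finType) (I : {set U}) (f : U -> {set T}) (F : {set T}) k :
  {in I, forall i, f i \subset F} ->
  {in I &, forall i j, i != j -> [disjoint f i & f j]} ->
  {in I, forall i, k <= #|f i|} -> k * #|I| <= #|F|.
Proof.
move=> sub dis kle.
have -> : k * #|I| = \sum_(i in I) k by rewrite sum_nat_const mulnC.
apply: (@leq_trans (\sum_(i in I) #|f i|)); first by apply: leq_sum => i /kle.
rewrite -card_bigcup_disj //; apply: subset_leq_card.
by apply/bigcupsP => i /sub.
Qed.

Lemma pack_pair v (B : {set {set 'I_v}}) : is_packing 4 B ->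
  forall b1 b2 x y, b1 \in B -> b2 \in B -> x != y -> x \in b1 -> y \in b1 ->
  x \in b2 -> y \in b2 -> b1 = b2.
Proof.
case/andP=> _ /forallP H b1 b2 x y B1 B2 xy x1 y1 x2 y2.
have := H x => /forallP /(_ y); rewrite xy /= => /card_le1_eqP; apply; by rewrite inE ?B1 ?B2 ?x1 ?y1 ?x2 ?y2.
Qed.

Lemma pack_card v (B : {set {set 'I_v}}) : is_packing 4 B -> forall b, b \in B -> #|b| = 4.
Proof. by case/andP=> /forall_inP H _ b /H /eqP. Qed.


Lemma ppcP v (B P : {set {set 'I_v}}) :
  reflect (P \subset B /\ {in P &, forall b1 b2 : {set 'I_v}, b1 != b2 -> [disjoint b1 & b2]})
          (is_ppc B P).
Proof.
apply: (iffP andP) => [[s /forall_inP H]|[s H]]; split => //.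
  by move=> b1 b2 h1 h2; move: (H b1 h1) => /forall_inP /(_ b2 h2) /implyP.
by apply/forall_inP => b1 h1; apply/forall_inP => b2 h2; apply/implyP; apply: H.
Qed.

Lemma ppcU v (B R1 R2 : {set {set 'I_v}}) : is_ppc B R1 -> is_ppc B R2 ->
  (forall b1 b2, b1 \in R1 -> b2 \in R2 -> [disjoint b1 & b2]) ->
  (forall b, b \in R1 -> b != set0) ->
  is_ppc B (R1 :|: R2) /\ #|R1 :|: R2| = #|R1| + #|R2|.
Proof.
move=> /ppcP[s1 d1] /ppcP[s2 d2] d12 ne; split.
  apply/ppcP; split; first by rewrite subUset s1 s2.
  move=> b1 b2 /setUP[h1|h1] /setUP[h2|h2] ne12; try by [apply: d1|apply: d2].
    exact: d12.
  by rewrite disjoint_sym; apply: d12.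
rewrite cardsU disjoint_setI0 ?cards0 ?subn0 //.
apply/pred0P => b /=; apply/negP => /andP[h1 h2].
have := d12 _ _ h1 h2; rewrite -setI_eq0 setIid => /eqP e.
by move: (ne _ h1); rewrite e eqxx.
Qed.

Lemma ppc1 v (B : {set {set 'I_v}}) D : D \in B -> is_ppc B [set D].
Proof.
move=> DB; apply/ppcP; split; first by rewrite sub1set.
by move=> b1 b2 /set1P -> /set1P ->; rewrite eqxx.
Qed.

Definition priv v (B P : {set {set 'I_v}}) (x : 'I_v) :=
  [set C in B | C :&: cover P == [set x]].

Lemma privP v (B P : {set {set 'I_v}}) x C : C \in priv B P x ->
  [/\ C \in B, x \in C, x \in cover P & forall t, t \in C -> t \in cover P -> t = x].
Proof.
rewrite inE => /andP[CB /eqP e].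
have : x \in C :&: cover P by rewrite e set11.
rewrite inE => /andP[xC xS]; split => // t tC tS.
have : t \in C :&: cover P by rewrite inE tC.
by rewrite e => /set1P.
Qed.

Lemma avoid v (B P : {set {set 'I_v}}) x (F : {set 'I_v}) :
  is_packing 4 B -> x \notin F -> #|F| < #|priv B P x| ->
  exists2 C, C \in priv B P x & [disjoint C & F].
Proof.
move=> pk xF lt.
case: (boolP [exists C in priv B P x, [disjoint C & F]]).
  by case/exists_inP => C h1 h2; exists C.
rewrite negb_exists_in => /forall_inP H; move: lt; rewrite ltnNge => /negP; case.
rewrite -[#|priv B P x|]mul1n; apply: (fam_le (f := fun C => C :&: F)).
- by move=> C _; apply: subsetIr.
- move=> C1 C2 h1 h2 ne; rewrite -setI_eq0; apply/eqP/setP => t; rewrite !inE.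
  apply/negP => /andP[/andP[t1 tF] /andP[t2 _]]; move/negP: ne; apply; apply/eqP.
  case/privP: h1 => b1 xC1 _ _; case/privP: h2 => b2 xC2 _ _.
  apply: (pack_pair pk b1 b2 (x := x) (y := t)) => //.
  by apply: contraNneq xF => ->.
- by move=> C hC; move: (H C hC); rewrite -setI_eq0 card_gt0.
Qed.


Lemma card_cover4 v (B Q : {set {set 'I_v}}) : is_packing 4 B -> Q \subset B ->
  #|cover Q| <= 4 * #|Q|.
Proof.
move=> pk /subsetP sQ; apply: leq_trans (leq_card_cover Q) _.
rewrite mulnC -sum_nat_const; apply: leq_sum => b /sQ bB; by rewrite (pack_card pk bB).
Qed.

Lemma exch v (B P : {set {set 'I_v}}) (D : {set 'I_v}) (A : {set {set 'I_v}})
  (h : {set 'I_v} -> 'I_v) :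
  is_packing 4 B -> is_ppc B P -> #|P| = 4 ->
  (forall R, is_ppc B R -> #|R| <= 4) -> D \in B -> A \subset P ->
  (forall b, b \in P -> ~~ [disjoint b & D] -> b \in A) ->
  (forall b, b \in A -> [/\ h b \in b, h b \notin D & 4 * #|A| < #|priv B P (h b)|]) ->
  False.
Proof.
move=> pk pP cP mx DB sAP tA hA.
have /ppcP[sPB dP] := pP.
have claim : forall n (A' : {set {set 'I_v}}), A' \subset A -> #|A'| = n -> exists Q,
   [/\ is_ppc B Q, forall q, q \in Q -> [disjoint q & D],
       forall (q b : {set 'I_v}), q \in Q -> b \in P :\: A' -> [disjoint q & b] & #|Q| = #|A'|].
  elim=> [|n IH] A' sA' cA'.
    exists set0; split => //; first by apply/ppcP; split; [apply: sub0set|move=> ? ?; rewrite inE].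
      by move=> q; rewrite inE.
      by move=> q b; rewrite inE.
    by rewrite cards0 cA'.
  have [b bA'] : exists b, b \in A'.
    by apply/set0Pn; rewrite -card_gt0 cA'.
  have bA : b \in A by apply: (subsetP sA').
  have bP : b \in P by apply: (subsetP sAP).
  have cb : #|A' :\ b| = n by move: cA'; rewrite (cardsD1 b A') bA' => [[]].
  have [Q0 [pQ0 dQ0 eQ0 cQ0]] := IH (A' :\ b) (subset_trans (subD1set _ _) sA') cb.
  have /ppcP[sQ0 dQ0'] := pQ0.
  case: (hA b bA) => hb hD hp.
  have cAb : #|A' :\ b| < #|A| .
    apply: leq_trans (subset_leq_card sA'); by rewrite (cardsD1 b A') bA'.
  have [C CP CF] : exists2 C, C \in priv B P (h b) & [disjoint C & D :|: cover Q0].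
    apply: (avoid pk).
      rewrite inE negb_or hD /=; apply/bigcupP => [[q qQ hq]].
      have := eQ0 q b qQ; rewrite !inE eqxx bP /= => /(_ isT).
      by move/disjointFr => /(_ _ hq); rewrite hb.
    apply: leq_ltn_trans hp; apply: leq_trans (leq_card_setU _ _) _.
    rewrite (pack_card pk DB).
    apply: leq_trans (leq_add (leqnn 4) (card_cover4 pk sQ0)) _.
    by rewrite cQ0 -mulnS leq_pmul2l.
  case/privP: (CP) => CB hC _ CS.
  have CD : [disjoint C & D] by apply: disjointWr CF; apply: subsetUl.
  have CQ : forall q, q \in Q0 -> [disjoint C & q].
    move=> q qQ; apply: disjointWr CF; apply: subset_trans (subsetUr D _).
    exact: bigcup_sup.
  have CnQ : C \notin Q0.
    apply/negP => CQ0; have := CQ C CQ0; rewrite -setI_eq0 setIid => /eqP C0.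
    by have := pack_card pk CB; rewrite C0 cards0.
  exists (C |: Q0); split.
  - apply/ppcP; split; first by rewrite subUset sub1set CB sQ0.
    move=> q1 q2 /setU1P[->|h1] /setU1P[->|h2]; rewrite ?eqxx //.
    + by move=> _; apply: CQ.
    + by move=> _; rewrite disjoint_sym; apply: CQ.
    + exact: dQ0'.
  - by move=> q /setU1P[->|qQ] //; apply: dQ0.
  - move=> q b' /setU1P[->|qQ] /setDP[b'P b'A].
      rewrite -setI_eq0; apply/eqP/setP => t; rewrite !inE; apply/negP => /andP[tC tb'].
      have tS : t \in cover P by apply/bigcupP; exists b'.
      have := CS t tC tS => et; subst t.
      have bb' : b != b' by apply: contraNneq b'A => <-.
      by rewrite (disjointFr (dP _ _ bP b'P bb') hb) in tb'.
    apply: eQ0 qQ _; rewrite inE b'P andbT; apply: contraNN b'A => /setD1P[] //.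
  - by rewrite cardsU1 CnQ cQ0 (cardsD1 b A') bA'.
have [Q [pQ dQ eQ cQ]] := claim _ A (subxx A) erefl.
have /ppcP[sQB _] := pQ.
have ne : forall b, b \in P :\: A -> b != set0.
  move=> b /setDP[bP _]; apply/negP => /eqP b0.
  by have := pack_card pk (subsetP sPB b bP); rewrite b0 cards0.
have pPA : is_ppc B (P :\: A).
  apply/ppcP; split; first by apply: subset_trans (subsetDl _ _) sPB.
  by move=> b1 b2 /setDP[h1 _] /setDP[h2 _]; apply: dP.
have neD : D \notin Q.
  apply/negP => DQ; have := dQ D DQ; rewrite -setI_eq0 setIid => /eqP D0.
  by have := pack_card pk DB; rewrite D0 cards0.
have pDQ : is_ppc B ([set D] :|: Q) /\ #|[set D] :|: Q| = #|[set D]| + #|Q|.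
  apply: ppcU (ppc1 DB) pQ _ _.
    by move=> b1 b2 /set1P -> b2Q; rewrite disjoint_sym; apply: dQ.
  move=> b /set1P -> ; apply/negP => /eqP D0.
  by have := pack_card pk DB; rewrite D0 cards0.
case: pDQ => pDQ cDQ.
have cross : forall b1 b2, b1 \in P :\: A -> b2 \in [set D] :|: Q -> [disjoint b1 & b2].
  move=> b1 b2 b1PA /setUP[/set1P ->|b2Q].
    case/setDP: b1PA => b1P b1A; apply/negPn; apply: contra b1A; exact: tA.
  by rewrite disjoint_sym; apply: eQ.
have [pR cR] := ppcU pPA pDQ cross ne.
have := mx _ pR; rewrite cR cDQ cards1 cQ.
have -> : #|P :\: A| = #|P| - #|A| by rewrite cardsD (setIidPr sAP).
have : #|A| <= 4 by rewrite -cP; apply: subset_leq_card.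
rewrite cP; clear; lia.
Qed.


Lemma card_bigcup_le (T U : finType) (f : U -> {set T}) (I : {set U}) :
  #|\bigcup_(i in I) f i| <= \sum_(i in I) #|f i|.
Proof.
elim: {I}_.+1 {-2}I (ltnSn #|I|) => // n IH I.
case: (set_0Vmem I) => [->|[i iI]] lt; first by rewrite !big_set0 cards0.
rewrite (big_setD1 _ iI) /= (big_setD1 _ iI) /=.
apply: leq_trans (leq_card_setU _ _) _; rewrite leq_add2l; apply: IH.
by rewrite (cardsD1 i I) iI in lt.
Qed.

Lemma arith_final r l v : r + l <= 4 -> 200 <= v ->
  r * (v - r) + 3 + 195 * l <= 4 * v - 10.
Proof.
case: r => [|[|[|[|[|r]]]]] /=; lia.
Qed.

Lemma arith_m a b : a + b = 4 -> 0 < a -> 0 < b -> 3 <= a * b.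
Proof. nia. Qed.

Lemma pairL v (B P : {set {set 'I_v}}) b x y :
  is_packing 4 B -> is_ppc B P -> #|P| = 4 ->
  (forall R, is_ppc B R -> #|R| <= 4) -> b \in P -> x \in b -> y \in b -> x != y ->
  5 <= #|priv B P x| -> 0 < #|priv B P y| -> False.
Proof.
move=> pk pP cP mx bP xb yb xy px py.
have /ppcP[sPB dP] := pP.
have [D DP] : exists D, D \in priv B P y by apply/set0Pn; rewrite -card_gt0.
case/privP: (DP) => DB yD yS DS.
have xS : x \in cover P by apply/bigcupP; exists b.
apply: (exch (D := D) (A := [set b]) (h := fun _ => x) pk pP cP mx DB).
- by rewrite sub1set.
- move=> b' b'P; rewrite -setI_eq0 => /set0Pn [t]; rewrite in_setI => /andP[tb' tD].
  have tS : t \in cover P by apply/bigcupP; exists b'.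
  have ety := DS t tD tS; subst t.
  case: (b' =P b) => [->|/eqP ne]; first by rewrite set11.
  by rewrite (disjointFr (dP _ _ b'P bP ne) tb') in yb.
- move=> b0 /set1P ->; split => //.
    by apply/negP => xD; move: xy; rewrite (DS x xD xS) eqxx.
  by rewrite cards1.
Qed.


Lemma upper v (B P : {set {set 'I_v}}) :
  is_packing 4 B -> is_ppc B P -> #|P| = 4 ->
  (forall R, is_ppc B R -> #|R| <= 4) -> 200 <= v -> 3 * #|B| <= 4 * v - 10.
Proof.
move=> pk pP cP mx v200.
have /ppcP[sPB dP] := pP.
set S := cover P.
set X := [set x in S | 17 <= #|priv B P x|].
set L := [set b in P | [disjoint b & X]].
set M := [set C in B | ~~ [disjoint C & X]].
set Touch := fun b : {set 'I_v} => [set C in B | ~~ [disjoint C & b]].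
have bS : forall b, b \in P -> b \subset S by move=> b bP; apply: bigcup_sup.
have cS : #|S| <= 16 by have := card_cover4 pk sPB; rewrite cP.
have X1 : forall b, b \in P -> #|b :&: X| <= 1.
  move=> b bP; apply/card_le1_eqP => x y; rewrite !inE => /and3P[xb xS px] /and3P[yb yS py].
  apply/eqP; apply/negPn/negP => xy.
  apply: (pairL pk pP cP mx bP _ _ xy) => //; first by apply: leq_trans py.
  by apply: leq_trans px.
have rL : #|X| + #|L| <= 4.
  have : #|X| <= #|P :\: L|.
    apply: (@leq_trans #|\bigcup_(b in P :\: L) (b :&: X)|).
      apply: subset_leq_card; apply/subsetP => x xX.
      have xS : x \in S by move: xX; rewrite inE => /andP[].
      case/bigcupP: xS => b bP xb; apply/bigcupP; exists b; last by rewrite inE xb.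
      rewrite !inE bP andbT; apply/negP => dj.
      by rewrite (disjointFr dj xb) in xX.
    apply: leq_trans (card_bigcup_le _ _) _.
    rewrite -sum1_card; apply: leq_sum => b /setDP[bP _]; exact: X1.
  have sLP : L \subset P by apply/subsetP => b; rewrite inE => /andP[].
  rewrite cardsD (setIidPr sLP) cP.
  have : #|L| <= 4 by rewrite -cP; apply: subset_leq_card.
  clear; lia.
have cov : forall D, D \in B -> ~~ [disjoint D & X] || [exists b in L, ~~ [disjoint b & D]].
  move=> D DB; case: (boolP [disjoint D & X]) => //= DX.
  case: (boolP [exists b in L, ~~ [disjoint b & D]]) => // nL0; exfalso.
  move: nL0; rewrite negb_exists_in => /forall_inP nL.
  have [y0 _] : exists y0, y0 \in D.
    by apply/set0Pn; rewrite -card_gt0 (pack_card pk DB).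
  pose h (b : {set 'I_v}) := odflt y0 [pick x in b :&: X].
  have sAP : [set b in P | ~~ [disjoint b & D]] \subset P.
    by apply/subsetP => b; rewrite inE => /andP[].
  apply: (exch (D := D) (A := [set b in P | ~~ [disjoint b & D]]) (h := h) pk pP cP mx DB sAP).
    by move=> b bP nd; rewrite inE bP nd.
  move=> b; rewrite inE => /andP[bP nd].
  have bL : b \notin L by apply/negP => /nL; rewrite nd.
  have : ~~ [disjoint b & X] by move: bL; rewrite inE bP.
  rewrite -setI_eq0 => /set0Pn [x0 x0bX].
  rewrite /h; case: pickP => [x|none] /=; last by rewrite none in x0bX.
  rewrite in_setI => /andP[xb xX]; split => //.
    by apply/negP => xD; rewrite (disjointFr DX xD) in xX.
  have : #|[set b in P | ~~ [disjoint b & D]]| <= 4 by rewrite -cP; apply: subset_leq_card.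
  move: xX; rewrite inE => /andP[_] h1 h2; apply: leq_trans h1.
  by rewrite ltnS -[16]/(4*4) leq_pmul2l.
have T65 : forall b, b \in L -> #|Touch b| <= 65.
  move=> b; rewrite inE => /andP[bP bX].
  have bB := subsetP sPB b bP.
  have cb := pack_card pk bB.
  set Cr := fun y => [set C in B | (y \in C) && ~~ [disjoint C & S :\: b]].
  have sub : Touch b \subset [set b] :|: ((\bigcup_(y in b) priv B P y) :|: \bigcup_(y in b) Cr y).
    apply/subsetP => C; rewrite inE => /andP[CB]; rewrite -setI_eq0 => /set0Pn[t].
    rewrite in_setI => /andP[tC tb].
    case: (C =P b) => [->|/eqP Cb]; first by rewrite !inE eqxx.
    rewrite !in_setU; apply/orP; right; apply/orP.
    case: (boolP [disjoint C & S :\: b]) => dj; last first.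
      by right; apply/bigcupP; exists t => //; rewrite inE CB tC dj.
    left; apply/bigcupP; exists t => //; rewrite inE CB /=; apply/eqP/setP => s; rewrite !inE.
    apply/andP/eqP => [[sC sS]|->]; last by rewrite tC (subsetP (bS b bP)).
    case: (boolP (s \in b)) => sb; last first.
      have : s \in S :\: b by rewrite !inE sb sS.
      by rewrite (disjointFr dj sC).
    apply/eqP/negPn/negP => st; move/eqP: Cb; apply.
    exact: (pack_pair pk CB bB st sC tC sb tb).
  have cSb : #|S :\: b| <= 12.
    rewrite cardsD (setIidPr (bS b bP)) cb; move: cS; clear; lia.
  have cr12 : forall y, y \in b -> #|Cr y| <= 12.
    move=> y yb; rewrite -[#|Cr y|]mul1n.
    apply: leq_trans (fam_le (f := fun C => C :&: (S :\: b)) _ _ _) cSb.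
    - by move=> C _; apply: subsetIr.
    - move=> C1 C2; rewrite !inE => /andP[C1B /andP[yC1 _]] /andP[C2B /andP[yC2 _]] ne.
      rewrite -setI_eq0; apply/eqP/setP => s; rewrite !inE.
      apply/negP => /andP[/andP[sC1 /andP[sb _]] /andP[sC2 _]].
      move/negP: ne; apply; apply/eqP.
      have sy : s != y by apply: contraNneq sb => ->.
      exact: (pack_pair pk C1B C2B sy sC1 yC1 sC2 yC2).
    - by move=> C; rewrite inE => /andP[_ /andP[_]]; rewrite -setI_eq0 card_gt0.
  have priv16 : \sum_(y in b) #|priv B P y| <= 16.
    case: (boolP [exists y in b, 5 <= #|priv B P y|]).
      case/exists_inP => y yb py; rewrite (big_setD1 y yb) /=.
      rewrite big1 ?addn0.
        have yS : y \in S by apply: (subsetP (bS b bP)).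
        move: (disjointFr bX yb); rewrite inE yS /= => /negbT; by rewrite -ltnNge ltnS.
      move=> z /setD1P[zy zb]; apply/eqP; rewrite -leqn0 leqNgt; apply/negP => pz.
      by apply: (pairL pk pP cP mx bP yb zb _ py pz); rewrite eq_sym.
    rewrite negb_exists_in => /forall_inP H.
    apply: leq_trans (_ : \sum_(y in b) 4 <= 16).
      by apply: leq_sum => y /H; rewrite -ltnNge ltnS.
    by rewrite sum_nat_const cb.
  apply: leq_trans (subset_leq_card sub) _.
  apply: leq_trans (leq_card_setU _ _) _; rewrite cards1.
  apply: leq_trans (leq_add (leqnn 1) (leq_card_setU _ _)) _.
  apply: leq_trans (leq_add (leqnn 1) (leq_add (card_bigcup_le _ _) (card_bigcup_le _ _))) _.
  have : \sum_(y in b) #|Cr y| <= 48.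
    apply: leq_trans (_ : \sum_(y in b) 12 <= 48).
      by apply: leq_sum => y /cr12.
    by rewrite sum_nat_const cb.
  move: priv16; clear; lia.
have M3 : 3 * #|M| <= #|X| * (v - #|X|) + 3.
  set M4 := [set C in M | C \subset X].
  set M1 := [set C in M | ~~ (C \subset X)].
  have sM : M \subset M1 :|: M4.
    apply/subsetP => C CM; rewrite in_setU !inE; move: CM; rewrite inE => /andP[-> ->] /=.
    by case: (C \subset X).
  have c4 : #|M4| <= 1.
    apply/card_le1_eqP => C1 C2.
    have rX : #|X| <= 4 by move: rL; clear; lia.
    have eX : forall C, C \in M4 -> C = X.
      move=> C; rewrite !inE => /andP[/andP[CB _] CX]; apply/eqP.
      by rewrite eqEcard CX (pack_card pk CB).
    by move=> /eX -> /eX ->.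
  have c1 : 3 * #|M1| <= #|X| * (v - #|X|).
    have cF : #|setX X (~: X)| = #|X| * (v - #|X|).
      rewrite cardsX; congr (_ * _); have := cardsC X; rewrite card_ord; clear; lia.
    rewrite -cF; apply: (fam_le (f := fun C => setX (C :&: X) (C :\: X))).
    - move=> C _; apply: setXS; first exact: subsetIr.
      by rewrite setDE; apply: subsetIr.
    - move=> C1 C2; rewrite !inE => /andP[/andP[C1B _] _] /andP[/andP[C2B _] _] ne.
      rewrite -setI_eq0; apply/eqP/setP => [[x z]]; rewrite !inE /=.
      apply/negP => /andP[/andP[/andP[xC1 xX] /andP[zX zC1]] /andP[/andP[xC2 _] /andP[_ zC2]]].
      move/negP: ne; apply; apply/eqP.
      have xz : x != z by apply: contraNneq zX => <-.
      exact: (pack_pair pk C1B C2B xz xC1 zC1 xC2 zC2).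
    - move=> C; rewrite !inE => /andP[/andP[CB CX] nCX].
      rewrite cardsX; apply: arith_m.
      + by rewrite cardsID (pack_card pk CB).
      + by rewrite card_gt0 setI_eq0.
      + by rewrite card_gt0 setD_eq0.
  apply: leq_trans (_ : 3 * (#|M1| + #|M4|) <= _).
    by rewrite leq_mul2l /=; apply: leq_trans (subset_leq_card sM) (leq_card_setU _ _).
  move: c1 c4; clear; lia.
have sB : B \subset M :|: \bigcup_(b in L) Touch b.
  apply/subsetP => C CB; rewrite in_setU; case/orP: (cov C CB) => [CX|/exists_inP[b bL bC]].
    by rewrite inE CB CX.
  by apply/orP; right; apply/bigcupP; exists b => //; rewrite inE CB disjoint_sym.
have cB : #|B| <= #|M| + 65 * #|L|.
  apply: leq_trans (subset_leq_card sB) _.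
  apply: leq_trans (leq_card_setU _ _) _; rewrite leq_add2l.
  apply: leq_trans (card_bigcup_le _ _) _.
  rewrite mulnC -sum_nat_const; apply: leq_sum => b; exact: T65.
have := arith_final rL v200.
move: cB M3; clear; lia.
Qed.


Definition md (m x : nat) := if x < m then x else x - m.
Definition pts (m a t : nat) : seq nat :=
  [:: a; 4 + t; 4 + m + md m (t + a); 4 + 2 * m + md m (t + 2 * a)].

Lemma md_lt m x : x < 2 * m -> md m x < m.
Proof. rewrite /md => h; case: (ltnP x m) => // h2; lia. Qed.

Lemma md_spec m x : x < 2 * m -> (x < m /\ md m x = x) \/ (m <= x /\ md m x = x - m).
Proof. rewrite /md; case: (ltnP x m) => h _; [left|right]; split => //. Qed.

Lemma key m a a' t t' k1 k2 : 7 <= m -> a < 4 -> a' < 4 -> t < m -> t' < m ->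
  k1 != k2 -> k1 \in pts m a t -> k2 \in pts m a t -> k1 \in pts m a' t' ->
  k2 \in pts m a' t' -> a = a' /\ t = t'.
Proof.
rewrite /pts !in_cons !in_nil !orbF => m7 a4 a'4 tm t'm /eqP ne H1 H2 H3 H4.
have c1 : t + a < 2 * m by lia.
have c2 : t + 2 * a < 2 * m by lia.
have c3 : t' + a' < 2 * m by lia.
have c4 : t' + 2 * a' < 2 * m by lia.
have B1 := md_lt c1; have B2 := md_lt c2; have B3 := md_lt c3; have B4 := md_lt c4.
case/or4P: H1; move/eqP=> e1; case/or4P: H3; move/eqP=> e3; try (exfalso; lia);
case/or4P: H2; move/eqP=> e2; case/or4P: H4; move/eqP=> e4; try (exfalso; lia);
case: (md_spec c1) => -[? ?]; case: (md_spec c2) => -[? ?];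
case: (md_spec c3) => -[? ?]; case: (md_spec c4) => -[? ?]; lia.
Qed.


Lemma card_valin N (s : seq nat) : uniq s -> all (fun k => k < N) s ->
  #|[set x : 'I_N | val x \in s]| = size s.
Proof.
move=> us alls.
set A := [set x : 'I_N | val x \in s].
have e : perm_eq (map val (enum A)) s.
  apply: uniq_perm => //; first by rewrite map_inj_uniq ?enum_uniq //; apply: val_inj.
  move=> k; apply/mapP/idP => [[x]|ks].
    by rewrite mem_enum inE => xs ->.
  have kN : k < N by move/allP: alls => /(_ k ks).
  by exists (Ordinal kN) => //; rewrite mem_enum inE.
by rewrite cardE -(size_map val) (perm_size e).
Qed.

Definition blk N m a t : {set 'I_N} := [set x : 'I_N | val x \in pts m a t].
Definition X0 N : {set 'I_N} := [set x : 'I_N | val x \in iota 0 4].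
Definition Fam N m : {set {set 'I_N}} :=
  [set blk N m (nat_of_ord p.1) (nat_of_ord p.2) | p : 'I_4 * 'I_m] :|: [set X0 N].

Lemma pts_small m a t k : a < 4 -> k < 4 -> k \in pts m a t -> k = a.
Proof. rewrite /pts !in_cons !in_nil !orbF => ? ? /or4P[] /eqP; lia. Qed.

Lemma pts_uniq m a t : 7 <= m -> a < 4 -> t < m -> uniq (pts m a t).
Proof.
move=> m7 a4 tm.
have B1 : md m (t + a) < m by apply: md_lt; lia.
have B2 : md m (t + 2 * a) < m by apply: md_lt; lia.
rewrite /pts /= !in_cons !in_nil !orbF /=; apply/and4P; split => //; apply/negP; lia.
Qed.

Lemma pts_all N m a t : 7 <= m -> a < 4 -> t < m -> 4 + 3 * m <= N ->
  all (fun k => k < N) (pts m a t).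
Proof.
move=> m7 a4 tm mN.
have B1 : md m (t + a) < m by apply: md_lt; lia.
have B2 : md m (t + 2 * a) < m by apply: md_lt; lia.
rewrite /pts /=; apply/and5P; split => //; lia.
Qed.

Lemma pts_diag m a a' k : 16 <= m -> a < 4 -> a' < 4 ->
  k \in pts m a (3 * a) -> k \in pts m a' (3 * a') -> a = a'.
Proof.
move=> m16 a4 a'4.
have e1 : md m (3 * a + a) = 3 * a + a by rewrite /md ifT //; lia.
have e2 : md m (3 * a + 2 * a) = 3 * a + 2 * a by rewrite /md ifT //; lia.
have e3 : md m (3 * a' + a') = 3 * a' + a' by rewrite /md ifT //; lia.
have e4 : md m (3 * a' + 2 * a') = 3 * a' + 2 * a' by rewrite /md ifT //; lia.
rewrite /pts e1 e2 e3 e4 !in_cons !in_nil !orbF.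
case/or4P => /eqP ?; case/or4P => /eqP ?; lia.
Qed.


Lemma lower N m : 16 <= m -> 4 + 3 * m <= N -> 4 * m + 1 <= beta 4 N 4.
Proof.
move=> m16 mN.
have m7 : 7 <= m by lia.
have cX0 : #|X0 N| = 4.
  by rewrite /X0 card_valin ?iota_uniq //=; apply/and4P; split; lia.
have cblk : forall a t, a < 4 -> t < m -> #|blk N m a t| = 4.
  by move=> a t a4 tm; rewrite /blk card_valin ?pts_uniq ?pts_all.
have inX0 : forall x : 'I_N, (x \in X0 N) = (val x < 4).
  by move=> x; rewrite inE mem_iota.
have smallpt : forall b, b \in Fam N m -> exists2 x : 'I_N, x \in b & val x < 4.
  move=> b; rewrite inE => /orP[/imsetP[[a t] _ ->]|/set1P ->].
    have aN : nat_of_ord a < N by have := ltn_ord a; lia.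
    exists (Ordinal aN) => //=; by rewrite inE /pts inE eqxx.
  have zN : 0 < N by lia.
  by exists (Ordinal zN) => //; rewrite inX0.
have blkinj : forall a t a' t', a < 4 -> t < m -> a' < 4 -> t' < m ->
    forall x y : 'I_N, x != y -> x \in blk N m a t -> y \in blk N m a t ->
    x \in blk N m a' t' -> y \in blk N m a' t' -> a = a' /\ t = t'.
  move=> a t a' t' a4 tm a'4 t'm x y xy; rewrite !in_set => h1 h2 h3 h4.
  apply: (key m7 a4 a'4 tm t'm _ h1 h2 h3 h4); by rewrite (inj_eq val_inj).
have pk : is_packing 4 (Fam N m).
  apply/andP; split.
    apply/forall_inP => b; rewrite inE => /orP[/imsetP[[a t] _ ->]|/set1P ->].
      by rewrite cblk.
    by rewrite cX0.
  apply/forallP => x; apply/forallP => y; apply/implyP => xy.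
  apply/card_le1_eqP => b1 b2.
  have hX : forall a t, a < 4 -> x \in blk N m a t -> y \in blk N m a t ->
      x \in X0 N -> y \in X0 N -> False.
    move=> a t a4; rewrite !inX0 !in_set => hx hy x4 y4.
    move/negP: xy; apply; apply/eqP/val_inj.
    by rewrite (pts_small a4 x4 hx) (pts_small a4 y4 hy).
  rewrite !in_set => /andP[hb1 /andP[h1 h2]] /andP[hb2 /andP[h3 h4]].
  case/orP: hb1 h1 h2 => [/imsetP[[a t] _ ->]|/set1P ->] h1 h2;
  case/orP: hb2 h3 h4 => [/imsetP[[a' t'] _ ->]|/set1P ->] h3 h4 //.
  - have [ea et] := blkinj _ _ _ _ (ltn_ord a) (ltn_ord t) (ltn_ord a') (ltn_ord t') _ _ xy h1 h2 h3 h4.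
    by move/val_inj: ea => ->; move/val_inj: et => ->.
  - by case: (hX _ _ (ltn_ord a) h1 h2 h3 h4).
  - by case: (hX _ _ (ltn_ord a') h3 h4 h1 h2).
have mx : max_ppc_size (Fam N m) = 4.
  apply/eqP; rewrite eqn_leq; apply/andP; split.
    apply/bigmax_leqP => R /ppcP[sR dR].
    rewrite -cX0 -[#|R|]mul1n; apply: (fam_le (f := fun b => b :&: X0 N)).
    - by move=> b _; apply: subsetIr.
    - move=> b1 b2 h1 h2 ne; have := dR _ _ h1 h2 ne.
      rewrite -!setI_eq0 => /eqP e; apply/eqP/setP => x; rewrite !inE.
      apply/negP => /andP[/andP[x1 _] /andP[x2 _]].
      have : x \in b1 :&: b2 by rewrite inE x1 x2.
      by rewrite e inE.
    - move=> b bR; have [x xb x4] := smallpt b (subsetP sR b bR).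
      by rewrite card_gt0; apply/set0Pn; exists x; rewrite inE xb inX0.
  set P0 := [set blk N m (nat_of_ord a) (3 * a) | a : 'I_4].
  have inP0 : forall a : 'I_4, nat_of_ord a < N by move=> a; have := ltn_ord a; lia.
  have aIn : forall a : 'I_4, Ordinal (inP0 a) \in blk N m a (3 * a).
    by move=> a; rewrite in_set /pts inE eqxx.
  have pP0 : is_ppc (Fam N m) P0.
    apply/ppcP; split.
      apply/subsetP => b /imsetP[a _ ->]; apply/setUP; left.
      have am : 3 * a < m by have := ltn_ord a; lia.
      by apply/imsetP; exists (a, Ordinal am).
    move=> b1 b2 /imsetP[a _ ->] /imsetP[a' _ ->] ne.
    rewrite -setI_eq0; apply/eqP/setP => x; rewrite in_setI in_set0 !in_set.
    apply/negP => /andP[h1 h2].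
    have := pts_diag m16 (ltn_ord a) (ltn_ord a') h1 h2 => /val_inj e.
    by move: ne; rewrite e eqxx.
  have cP0 : #|P0| = 4.
    rewrite card_imset ?card_ord // => a a' e.
    have := aIn a; rewrite e in_set => h.
    by apply/val_inj; rewrite /= (pts_small (ltn_ord a') (ltn_ord a) h).
  by rewrite -cP0; apply: (leq_bigmax_cond P0 pP0).
have cF : #|Fam N m| = 4 * m + 1.
  have inj : injective (fun p : 'I_4 * 'I_m => blk N m (nat_of_ord p.1) (nat_of_ord p.2)).
    move=> [a t] [a' t'] /= e.
    have aN : nat_of_ord a < N by have := ltn_ord a; lia.
    have tN : 4 + t < N by have := ltn_ord t; lia.
    have h1 : Ordinal aN \in blk N m a t by rewrite in_set /pts inE eqxx.
    have h2 : Ordinal tN \in blk N m a t by rewrite in_set /pts !inE eqxx orbT.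
    have ne : Ordinal aN != Ordinal tN.
      by apply/negP => /eqP [] /=; have := ltn_ord a; lia.
    have h3 := h1; have h4 := h2; rewrite e in h3 h4.
    have [ea et] := blkinj _ _ _ _ (ltn_ord a) (ltn_ord t) (ltn_ord a') (ltn_ord t') _ _ ne h1 h2 h3 h4.
    by move/val_inj: ea => ->; move/val_inj: et => ->.
  rewrite /Fam cardsU card_imset // card_prod !card_ord cards1.
  suff -> : [set blk N m (nat_of_ord p.1) (nat_of_ord p.2) | p : 'I_4 * 'I_m] :&: [set X0 N] = set0.
    by rewrite cards0 subn0 mulnC.
  apply/setP => b; rewrite in_setI in_set0; apply/negP => /andP[/imsetP[[a t] _ ->]].
  move=> /set1P e.
  have zN : 0 < N by lia.
  have oN : 1 < N by lia.
  have h0 : Ordinal zN \in X0 N by rewrite inX0.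
  have h1 : Ordinal oN \in X0 N by rewrite inX0.
  rewrite -e !in_set in h0 h1.
  have := pts_small (ltn_ord a) (isT : 0 < 4) h0.
  have := pts_small (ltn_ord a) (isT : 1 < 4) h1.
  by move=> <-.
rewrite -cF; apply: (leq_bigmax_cond (Fam N m)).
by rewrite pk mx eqxx.
Qed.

Unset Implicit Arguments.

Theorem theorem4p4 (v : nat) : 240 <= v ->
  beta 4 v 4 <= (4 * v - 10) %/ 3 /\
  (v %% 3 = 0 -> (4 * v - 21) %/ 3 <= beta 4 v 4) /\
  (v %% 3 = 1 -> (4 * v - 13) %/ 3 <= beta 4 v 4) /\
  (v %% 3 = 2 -> (4 * v - 17) %/ 3 <= beta 4 v 4).
Proof.
move=> v240.
have LB : 4 * ((v - 4) %/ 3) + 1 <= beta 4 v 4.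
  apply: lower; move: v240; clear; lia.
split.
  apply/bigmax_leqP => B /andP[pk /eqP mxB].
  have p0 : is_ppc B set0 by apply/ppcP; split; [apply: sub0set | move=> ? ?; rewrite inE].
  have [P pP cP] : exists2 P, is_ppc B P & #|P| = 4.
    move: mxB; rewrite /max_ppc_size (bigmax_eq_arg set0 p0).
    by case: arg_maxnP => // P pP _ e; exists P.
  have mx : forall R, is_ppc B R -> #|R| <= 4.
    by move=> R pR; rewrite -mxB; apply: (leq_bigmax_cond R pR).
  have v200 : 200 <= v by move: v240; clear; lia.
  have := upper pk pP cP mx v200.
  rewrite leq_divRL //; clear; lia.
move: LB; generalize (beta 4 v 4) => b LB.
by split; [|split] => h; move: LB v240 h; clear; lia.
Qed.
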